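(* Let $Y_0$ be $\mathbb Z_+$-valued with $(m-1)\mathbf E(Y_0m^{Y_0})=\mathbf E(m^{Y_0})<\infty$. Fix an integer $i\ge0$ and let $N_n$ denote either $N_n^\#$ or $N_n^{(i)}$. Then for all $n\ge1$, $$\mathbf E[m^{Y_n}(1+Y_n)N_n]=\mathbf E[m^{Y_0}(1+Y_0)N_0]\prod_{k=0}^{n-1}[\mathbf E(m^{Y_k})]^{m-1}.$$ (Here $\mathbf E[m^{Y_0}(1+Y_0)N_0^{(i)}]=m^i(1+i)\mathbf P(Y_0=i)$ and $\mathbf E[m^{Y_0}(1+Y_0)N_0^\#]=\mathbf E[m^{Y_0}(1+Y_0)]$.)
   Context: Fix an integer $m\ge2$. Hierarchical representation: on a reversed $m$-ary tree (each vertex $x$ of generation $|x|\ge1$ has $m$ parents $x^{(1)},\dots,x^{(m)}$ in generation $|x|-1$ and each vertex a unique child in the next generation), let $Y(x)$, $|x|=0$, be i.i.d. with the law of $Y_0$ and $Y(x):=(Y(x^{(1)})+\cdots+Y(x^{(m)})-1)^+$ for $|x|\ge1$. A path leading to $x$ is $(x_0,\dots,x_{|x|}=x)$ with $|x_j|=j$ and $x_{j+1}$ the child of $x_j$; it is open if for every vertex $z$ on it with $|z|\ge1$, $Y(z^{(1)})+\cdots+Y(z^{(m)})\ge1$ (paths with $|x|=0$ are open). $N^\#(x)$ is the number of open paths leading to $x$, $N^{(i)}(x)$ the number of those with $Y(x_0)=i$. For a fixed vertex $\mathfrak e_n$ of generation $n$ (with $\mathfrak e_{n+1}$ the child of $\mathfrak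 e_n$), $N_n^\#:=N^\#(\mathfrak e_n)$, $N_n^{(i)}:=N^{(i)}(\mathfrak e_n)$, $Y_n:=Y(\mathfrak e_n)$; $Y_n$ has the law of the $n$-th term of the recursive system $Y_{n+1}\overset d=(Y_{n,1}+\cdots+Y_{n,m}-1)^+$. *)

(* Defs.v *)
From Stdlib Require Import Reals List Arith.
Import ListNotations.
Open Scope R_scope.

(* Vertices above the fixed vertex e_n are encoded by addresses: e_n has
   address [], and the j-th parent (0 <= j < m) of the vertex with address w
   is the vertex with address (j :: w).  A vertex of generation n - k above
   e_n has an address of length k. *)

Fixpoint addrs (m k : nat) : list (list nat) :=
  match k with
  | O => [[]]
  | S k => flat_map (fun u => map (fun j => j :: u) (seq 0 m)) (addrs m k)
  end.

(* Y(x) for a vertex x of generation k (counted from the leaves) at address w,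
   given the generation-0 values c.  Truncated nat subtraction is (.)^+. *)
Fixpoint Yv (m : nat) (c : list nat -> nat) (k : nat) (w : list nat) : nat :=
  match k with
  | O => c w
  | S k => (list_sum (map (fun j => Yv m c k (j :: w)) (seq 0 m)) - 1)%nat
  end.

(* Weighted number of open paths leading to the vertex of generation k at
   address w; a path starting at x_0 is counted with weight wt (Y(x_0)).
   wt = 1 gives N^#, wt = indicator of {i} gives N^(i). *)
Fixpoint Nv (m : nat) (c : list nat -> nat) (wt : nat -> nat)
         (k : nat) (w : list nat) : nat :=
  match k with
  | O => wt (c w)
  | S k =>
      if (1 <=? list_sum (map (fun j => Yv m c k (j :: w)) (seq 0 m)))%nat
      then list_sum (map (fun j => Nv m c wt k (j :: w)) (seq 0 m))
      else O
  end.

Definition weight (sharp : bool) (i : nat) (y : nat) : nat :=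
  if sharp then 1%nat else if Nat.eqb y i then 1%nat else 0%nat.

Fixpoint assign (L : list (list nat)) (vals : list nat) (a : list nat) : nat :=
  match L with
  | [] => O
  | l :: L => if list_eq_dec Nat.eq_dec l a then hd O vals
              else assign L (tl vals) a
  end.

(* HasExp p K f v : for K i.i.d. variables with law p on nat, the
   (nonnegative) function f of the vector of their values has (finite)
   expectation v; computed as an iterated series (Tonelli). *)
Inductive HasExp (p : nat -> R) : nat -> (list nat -> R) -> R -> Prop :=
| HasExp0 : forall f, HasExp p O f (f [])
| HasExpS : forall K f (g : nat -> R) v,
    (forall y, HasExp p K (fun l => f (y :: l)) (g y)) ->
    infinite_sum (fun y => p y * g y) v ->
    HasExp p (S K) f v.

(* Expectation of a functional F of the i.i.d. generation-0 values (law p)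
   on the m^n leaves of the tree above e_n. *)
Definition Expect (p : nat -> R) (m n : nat) (F : (list nat -> nat) -> R)
  (v : R) : Prop :=
  HasExp p (m ^ n) (fun vals => F (assign (addrs m n) vals)) v.

Definition Rprod_upto (e : nat -> R) (n : nat) : R :=
  fold_right Rmult 1 (map e (seq 0 n)).

(* Main.v *)
Require Import Defs.
From Stdlib Require Import Reals List Arith Lia Lra.
From Stdlib Require Import IndefiniteDescription.
From Coquelicot Require Import Coquelicot.
Import ListNotations.
Open Scope R_scope.

Lemma isum_ext (f g : nat -> R) v : (forall n, f n = g n) -> infinite_sum f v -> infinite_sum g v.
Proof. intros H S. apply is_series_Reals. apply is_series_Reals in S. now apply (is_series_ext f). Qed.

Lemma isum_plus (f g : nat -> R) a b : infinite_sum f a -> infinite_sum g b ->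
  infinite_sum (fun n => f n + g n) (a + b).
Proof. intros H1 H2. apply is_series_Reals. apply is_series_Reals in H1, H2.
  exact (is_series_plus _ _ _ _ H1 H2). Qed.

Lemma isum_scal (f : nat -> R) c a : infinite_sum f a ->
  infinite_sum (fun n => c * f n) (c * a).
Proof. intros H1. apply is_series_Reals. apply is_series_Reals in H1.
  exact (is_series_scal c _ _ H1). Qed.

Lemma isum_dom (f g : nat -> R) b : (forall n, 0 <= f n <= g n) -> infinite_sum g b ->
  exists a, infinite_sum f a /\ 0 <= a <= b.
Proof. intros H Hg. apply is_series_Reals in Hg.
  assert (Ef : ex_series f).
  { apply (ex_series_le f g). intros n. change (Rabs (f n) <= g n).
    rewrite Rabs_pos_eq; apply H. now exists b. }
  exists (Series f). split. apply is_series_Reals. now apply Series_correct.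
  split.
  - assert (Z : is_series (fun _ : nat => 0) 0).
    { apply is_series_Reals. intros eps He. exists 0%nat. intros n _.
      rewrite sum_cte. unfold R_dist. rewrite Rmult_0_l, Rminus_0_r, Rabs_R0. exact He. }
    rewrite <- (is_series_unique _ _ Z). apply Series_le; [|exact Ef].
    intros n; split; [lra| apply H].
  - rewrite <- (is_series_unique g b Hg). apply Series_le; [apply H| now exists b].
Qed.


Lemma HasExp_inv p K f v : HasExp p (S K) f v -> exists g,
  (forall y, HasExp p K (fun l => f (y :: l)) (g y)) /\ infinite_sum (fun y => p y * g y) v.
Proof. intros H. inversion H; subst. eauto. Qed.

Lemma HasExp_ext p K f g v : (forall l, f l = g l) -> HasExp p K f v -> HasExp p K g v.
Proof. intros E H. revert g E. induction H; intros g' E.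
  - rewrite E. constructor.
  - eapply HasExpS with (g := g). intros y. apply H0. intros; apply E. exact H1.
Qed.

Lemma HasExp_unique p K f v w : HasExp p K f v -> HasExp p K f w -> v = w.
Proof. intros H. revert w. induction H; intros w Hw.
  - inversion Hw; auto.
  - apply HasExp_inv in Hw. destruct Hw as [g' [Hg Hs]].
    assert (forall y, g y = g' y) by (intros; apply H0; apply Hg).
    eapply uniqueness_sum; [exact H1|]. eapply isum_ext; [|exact Hs]. intros; simpl; rewrite H2; auto.
Qed.

Lemma HasExp_plus p K f g a b : HasExp p K f a -> HasExp p K g b ->
  HasExp p K (fun l => f l + g l) (a + b).
Proof. intros H. revert g b. induction H; intros g' b Hb.
  - inversion Hb; subst. constructor.
  - apply HasExp_inv in Hb. destruct Hb as [g2 [Hg Hs]].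
    apply HasExpS with (g := fun y => g y + g2 y). intros y. apply H0. apply Hg.
    eapply isum_ext; [|exact (isum_plus _ _ _ _ H1 Hs)]. intros; simpl; ring.
Qed.

Lemma HasExp_scal p K f c a : HasExp p K f a -> HasExp p K (fun l => c * f l) (c * a).
Proof. intros H. induction H.
  - constructor.
  - apply HasExpS with (g := fun y => c * g y). intros y. apply H0.
    eapply isum_ext; [|exact (isum_scal _ c _ H1)]. intros; simpl; ring.
Qed.

Lemma HasExp_dom p K f g b : (forall y, 0 <= p y) -> (forall l, 0 <= f l <= g l) ->
  HasExp p K g b -> exists a, HasExp p K f a /\ 0 <= a <= b.
Proof. intros Hp Hfg H. revert f Hfg. induction H; intros f' Hfg.
  - exists (f' []). split. constructor. apply Hfg.
  - assert (Hc : forall y, exists a, HasExp p K (fun l => f' (y :: l)) a /\ 0 <= a <= g y).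
    { intros y. apply H0. intros; apply Hfg. }
    set (u := fun y => proj1_sig (constructive_indefinite_description _ (Hc y))).
    assert (Hu : forall y, HasExp p K (fun l => f' (y :: l)) (u y) /\ 0 <= u y <= g y).
    { intros y. unfold u. destruct (constructive_indefinite_description _ (Hc y)); auto. }
    destruct (isum_dom (fun y => p y * u y) (fun y => p y * g y) v) as [a [Ha1 Ha2]]; auto.
    + intros y. destruct (Hu y) as [_ [h1 h2]]. specialize (Hp y). split; nra.
    + exists a; split; auto. apply HasExpS with (g := u); auto. intros; apply Hu.
Qed.

Lemma HasExp_prod p K1 K2 f g a b : HasExp p K1 f a -> HasExp p K2 g b ->
  HasExp p (K1 + K2) (fun l => f (firstn K1 l) * g (skipn K1 l)) (a * b).
Proof. intros H. revert g b. induction H; intros g' b Hb.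
  - simpl. apply (HasExp_scal _ _ _ (f []) _ Hb).
  - simpl. apply HasExpS with (g := fun y => g y * b). intros y. 
    exact (H0 y g' b Hb).
    rewrite Rmult_comm. eapply isum_ext; [|exact (isum_scal _ b _ H1)]. intros; simpl; ring.
Qed.


Lemma flat_map_flat_map {A B C} (G : B -> list C) (H : A -> list B) L :
  flat_map G (flat_map H L) = flat_map (fun x => flat_map G (H x)) L.
Proof. induction L; simpl; auto. rewrite flat_map_app, IHL; auto. Qed.

Lemma addrs_S m n : addrs m (S n) =
  flat_map (fun j => map (fun l => l ++ [j]) (addrs m n)) (seq 0 m).
Proof.
  induction n.
  - simpl. rewrite app_nil_r. generalize (seq 0 m). intros L. induction L as [|a L IH]; simpl; try rewrite IH; auto.
  - change (addrs m (S (S n))) with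
      (flat_map (fun u => map (fun j => j :: u) (seq 0 m)) (addrs m (S n))).
    rewrite IHn at 1. rewrite flat_map_flat_map. apply flat_map_ext. intros j.
    simpl. generalize (addrs m n). intros L. induction L as [|a L IH]; simpl; auto.
    rewrite IH, map_app, map_map. auto.
Qed.

Lemma length_flat_map_cons m L :
  length (flat_map (fun u : list nat => map (fun j => j :: u) (seq 0 m)) L) = (m * length L)%nat.
Proof. induction L; simpl; try lia. rewrite length_app, length_map, length_seq, IHL. lia. Qed.

Lemma addrs_length m n : length (addrs m n) = (m ^ n)%nat.
Proof. induction n; simpl; auto. rewrite length_flat_map_cons, IHn. auto. Qed.

Lemma assign_in L1 L2 v a : In a L1 -> assign (L1 ++ L2) v a = assign L1 v a.
Proof. revert v; induction L1; intros v Hin; simpl in *. contradiction.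
  destruct (list_eq_dec Nat.eq_dec a0 a); auto. destruct Hin; [congruence|]. auto. Qed.

Lemma assign_notin L1 L2 v a : ~ In a L1 ->
  assign (L1 ++ L2) v a = assign L2 (skipn (length L1) v) a.
Proof. revert v; induction L1; intros v Hin; simpl in *. auto.
  destruct (list_eq_dec Nat.eq_dec a0 a). exfalso; auto.
  rewrite IHL1 by tauto. destruct v; simpl; auto. destruct (length L1); auto. Qed.

Lemma assign_firstn L v a : assign L v a = assign L (firstn (length L) v) a.
Proof. revert v; induction L; intros v; simpl; auto.
  destruct v; simpl; destruct (list_eq_dec Nat.eq_dec a0 a); auto. Qed.

Lemma assign_map (h : list nat -> list nat) L v a : (forall x y, h x = h y -> x = y) ->
  assign (map h L) v (h a) = assign L v a.
Proof. intros Hi. revert v; induction L; intros v; simpl; auto.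
  destruct (list_eq_dec Nat.eq_dec (h a0) (h a)); destruct (list_eq_dec Nat.eq_dec a0 a);
  subst; auto. apply Hi in e; contradiction. congruence. Qed.

Definition blk (K j : nat) (v : list nat) := firstn K (skipn (j * K) v).

Lemma assign_blk Ln l r : In l Ln -> forall j0 j v, (j0 <= j < j0 + r)%nat ->
  assign (flat_map (fun j => map (fun l => l ++ [j]) Ln) (seq j0 r)) v (l ++ [j])
  = assign Ln (blk (length Ln) (j - j0) v) l.
Proof.
  intros Hl. induction r; intros j0 j v Hj. lia.
  simpl. assert (Hinj : forall (j1 : nat) (x y : list nat), x ++ [j1] = y ++ [j1] -> x = y).
  { intros j1 x y E. apply app_inj_tail in E. tauto. }
  destruct (Nat.eq_dec j j0).
  - subst. rewrite assign_in. rewrite (assign_map (fun l => l ++ [j0])) by apply Hinj.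
    rewrite Nat.sub_diag. unfold blk. simpl. apply assign_firstn.
    apply in_map_iff. eauto.
  - rewrite assign_notin. rewrite IHr by lia. rewrite length_map. unfold blk.
    replace (j - j0)%nat with (S (j - S j0)) by lia. simpl.
    rewrite skipn_skipn. rewrite Nat.add_comm. auto.
    intros Hin. apply in_map_iff in Hin. destruct Hin as [x [E _]].
    apply app_inj_tail in E. destruct E; congruence.
Qed.

Lemma Yv_app m c k w j : Yv m c k (w ++ [j]) = Yv m (fun a => c (a ++ [j])) k w.
Proof. revert w; induction k; intros w; simpl; auto.
  f_equal. f_equal. apply map_ext. intros i. apply (IHk (i :: w)). Qed.

Lemma Nv_app m c wt k w j : Nv m c wt k (w ++ [j]) = Nv m (fun a => c (a ++ [j])) wt k w.
Proof. revert w; induction k; intros w; simpl; auto.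
  rewrite (map_ext (fun j0 => Yv m c k (j0 :: w ++ [j]))
    (fun j0 => Yv m (fun a => c (a ++ [j])) k (j0 :: w))) by (intros i; apply (Yv_app m c k (i :: w))).
  rewrite (map_ext (fun j0 => Nv m c wt k (j0 :: w ++ [j]))
    (fun j0 => Nv m (fun a => c (a ++ [j])) wt k (j0 :: w))) by (intros i; apply (IHk (i :: w))).
  auto. Qed.

Lemma in_addrs_S m k l j : In l (addrs m k) -> (j < m)%nat -> In (l ++ [j]) (addrs m (S k)).
Proof. intros H Hj. rewrite addrs_S. apply in_flat_map. exists j. split.
  apply in_seq; lia. apply in_map_iff; eauto. Qed.

Lemma Yv_congr m c c' k w : (forall l, In l (addrs m k) -> c (l ++ w) = c' (l ++ w)) ->
  Yv m c k w = Yv m c' k w.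
Proof. revert w; induction k; intros w H; simpl.
  - apply (H []); simpl; auto.
  - f_equal; f_equal. apply map_ext_in. intros j Hj. apply in_seq in Hj. apply IHk.
    intros l Hl. replace (l ++ j :: w) with ((l ++ [j]) ++ w) by (rewrite <- app_assoc; auto).
    apply H. apply in_addrs_S; auto. lia.
Qed.

Lemma Nv_congr m c c' wt k w : (forall l, In l (addrs m k) -> c (l ++ w) = c' (l ++ w)) ->
  Nv m c wt k w = Nv m c' wt k w.
Proof. revert w; induction k; intros w H; simpl.
  - f_equal. apply (H []); simpl; auto.
  - assert (H' : forall j, In j (seq 0 m) -> forall l, In l (addrs m k) ->
        c (l ++ j :: w) = c' (l ++ j :: w)).
    { intros j Hj l Hl. apply in_seq in Hj.
      replace (l ++ j :: w) with ((l ++ [j]) ++ w) by (rewrite <- app_assoc; auto).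
      apply H. apply in_addrs_S; auto. lia. }
    rewrite (map_ext_in (fun j => Yv m c k (j :: w)) (fun j => Yv m c' k (j :: w)))
      by (intros j Hj; apply Yv_congr; apply H'; auto).
    rewrite (map_ext_in (fun j => Nv m c wt k (j :: w)) (fun j => Nv m c' wt k (j :: w)))
      by (intros j Hj; apply IHk; apply H'; auto).
    auto.
Qed.

Lemma Yv_blk m n v j : (j < m)%nat ->
  Yv m (assign (addrs m (S n)) v) n [j] = Yv m (assign (addrs m n) (blk (m ^ n) j v)) n [].
Proof. intros Hj. change [j] with ([] ++ [j]). rewrite Yv_app. apply Yv_congr.
  intros l Hl. rewrite app_nil_r. rewrite addrs_S, assign_blk by (auto; lia).
  rewrite addrs_length, Nat.sub_0_r. auto. Qed.

Lemma Nv_blk m wt n v j : (j < m)%nat ->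
  Nv m (assign (addrs m (S n)) v) wt n [j] = Nv m (assign (addrs m n) (blk (m ^ n) j v)) wt n [].
Proof. intros Hj. change [j] with ([] ++ [j]). rewrite Nv_app. apply Nv_congr.
  intros l Hl. rewrite app_nil_r. rewrite addrs_S, assign_blk by (auto; lia).
  rewrite addrs_length, Nat.sub_0_r. auto. Qed.


Fixpoint sY (K : nat) (yb : list nat -> nat) (r : nat) (v : list nat) : nat :=
  match r with O => O | S r => (yb (firstn K v) + sY K yb r (skipn K v))%nat end.

Lemma sY_sum K yb r v : sY K yb r v = list_sum (map (fun j => yb (blk K j v)) (seq 0 r)).
Proof. revert v; induction r; intros v; simpl; auto. f_equal.
  rewrite IHr, <- seq_shift, map_map. f_equal. apply map_ext. intros j. unfold blk.
  simpl. rewrite skipn_skipn. f_equal. f_equal. f_equal. lia. Qed.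

Fixpoint qP B r := match r with O => 1 | S r => B * qP B r end.
Fixpoint qQ B A r := match r with O => 0 | S r => A * qP B r + B * qQ B A r end.
Fixpoint qU B C r := match r with O => 0 | S r => C * qP B r + B * qU B C r end.
Fixpoint qV B A C D r := match r with O => 0 | S r => D * qP B r + C * qQ B A r + A * qU B C r + B * qV B A C D r end.

Lemma qP_eq B r : qP B r = B ^ r.
Proof. induction r; simpl; try rewrite IHr; auto. Qed.

Lemma q_closed B A C D r : qQ B A (S r) = INR (S r) * A * B ^ r /\ qU B C (S r) = INR (S r) * C * B ^ r /\
  qV B A C D (S r) = INR (S r) * D * B ^ r + INR (S r) * INR r * C * A * B ^ (pred r).
Proof. induction r.
  - simpl. split; [|split]; ring.
  - destruct IHr as [h1 [h2 h3]]. change (qQ B A (S (S r))) with (A * qP B (S r) + B * qQ B A (S r)).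
    change (qU B C (S (S r))) with (C * qP B (S r) + B * qU B C (S r)).
    change (qV B A C D (S (S r))) with (D * qP B (S r) + C * qQ B A (S r) + A * qU B C (S r) + B * qV B A C D (S r)).
    rewrite h1, h2, h3, !qP_eq. destruct r.
    + simpl. split; [|split]; ring.
    + simpl pred. simpl pow. rewrite !S_INR. split; [|split]; ring.
Qed.

Lemma HasExp_c0 p f c : (forall l, f l = c) -> HasExp p 0 f c.
Proof. intros H. rewrite <- (H []). apply HasExp0. Qed.

Lemma blocks p m K yb nb B A C D :
  HasExp p K (fun l => INR m ^ yb l) B ->
  HasExp p K (fun l => INR (yb l) * INR m ^ yb l) A ->
  HasExp p K (fun l => INR (nb l) * INR m ^ yb l) C ->
  HasExp p K (fun l => INR (nb l) * INR (yb l) * INR m ^ yb l) D ->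
  forall r,
  HasExp p (r * K) (fun v => INR m ^ sY K yb r v) (qP B r) /\
  HasExp p (r * K) (fun v => INR (sY K yb r v) * INR m ^ sY K yb r v) (qQ B A r) /\
  HasExp p (r * K) (fun v => INR (sY K nb r v) * INR m ^ sY K yb r v) (qU B C r) /\
  HasExp p (r * K) (fun v => INR (sY K nb r v) * INR (sY K yb r v) * INR m ^ sY K yb r v)
     (qV B A C D r).
Proof.
  intros HB HA HC HD r. induction r.
  - simpl. split; [|split; [|split]]; apply HasExp_c0; intros; simpl; ring.
  - destruct IHr as [IP [IQ [IU IV]]]. simpl (S r * K)%nat. simpl qP; simpl qQ; simpl qU; simpl qV.
    split; [|split; [|split]].
    + eapply HasExp_ext; [|exact (HasExp_prod _ _ _ _ _ _ _ HB IP)].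
      intros v; simpl. rewrite pow_add. auto.
    + eapply HasExp_ext; [|exact (HasExp_plus _ _ _ _ _ _ (HasExp_prod _ _ _ _ _ _ _ HA IP)
                                                     (HasExp_prod _ _ _ _ _ _ _ HB IQ))].
      intros v; simpl. rewrite pow_add, plus_INR. ring.
    + eapply HasExp_ext; [|exact (HasExp_plus _ _ _ _ _ _ (HasExp_prod _ _ _ _ _ _ _ HC IP)
                                                     (HasExp_prod _ _ _ _ _ _ _ HB IU))].
      intros v; simpl. rewrite pow_add, plus_INR. ring.
    + rewrite (Rplus_assoc (_ + _)). eapply HasExp_ext; [|exact (HasExp_plus _ _ _ _ _ _
         (HasExp_plus _ _ _ _ _ _ (HasExp_prod _ _ _ _ _ _ _ HD IP) (HasExp_prod _ _ _ _ _ _ _ HC IQ))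
         (HasExp_plus _ _ _ _ _ _ (HasExp_prod _ _ _ _ _ _ _ HA IU) (HasExp_prod _ _ _ _ _ _ _ HB IV)))].
      intros v; simpl. rewrite pow_add, !plus_INR. ring.
Qed.


Definition yb m n l := Yv m (assign (addrs m n) l) n [].
Definition nb m wt n l := Nv m (assign (addrs m n) l) wt n [].

Lemma Y_S m n v : Yv m (assign (addrs m (S n)) v) (S n) [] = (sY (m ^ n) (yb m n) m v - 1)%nat.
Proof. cbn [Yv]. rewrite sY_sum. f_equal. f_equal. apply map_ext_in. intros j Hj.
  apply in_seq in Hj. apply Yv_blk. lia. Qed.

Lemma N_S m wt n v : Nv m (assign (addrs m (S n)) v) wt (S n) [] =
  if (1 <=? sY (m ^ n) (yb m n) m v)%nat then sY (m ^ n) (nb m wt n) m v else O.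
Proof. cbn [Nv]. rewrite !sY_sum.
  rewrite (map_ext_in (fun j => Yv m (assign (addrs m (S n)) v) n [j]) (fun j => yb m n (blk (m ^ n) j v))).
  rewrite (map_ext_in (fun j => Nv m (assign (addrs m (S n)) v) wt n [j]) (fun j => nb m wt n (blk (m ^ n) j v))).
  auto.
  all: intros j Hj; apply in_seq in Hj; first [apply Nv_blk | apply Yv_blk]; lia.
Qed.

Definition Inv p m wt n B A C D :=
 Expect p m n (fun c => INR m ^ Yv m c n []) B /\
 Expect p m n (fun c => INR (Yv m c n []) * INR m ^ Yv m c n []) A /\
 Expect p m n (fun c => INR (Nv m c wt n []) * INR m ^ Yv m c n []) C /\
 Expect p m n (fun c => INR (Nv m c wt n []) * INR (Yv m c n []) * INR m ^ Yv m c n []) D.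

Lemma INR_m_ge1 m : (2 <= m)%nat -> 1 <= INR m.
Proof. intros H. apply (le_INR 1). lia. Qed.

Lemma pow_mono x a b : 1 <= x -> (a <= b)%nat -> 0 <= x ^ a <= x ^ b.
Proof. intros. split. apply pow_le; lra. apply Rle_pow; auto. Qed.

Lemma dom' p K f g b : HasExp p K g b -> (forall y, 0 <= p y) -> (forall l, 0 <= f l <= g l) ->
  exists a, HasExp p K f a.
Proof. intros H Hp Hf. destruct (HasExp_dom p K f g b Hp Hf H) as [a [Ha _]]; eauto. Qed.

Lemma inv_step p m wt n B A C D : (2 <= m)%nat -> (forall y, 0 <= p y) ->
  Inv p m wt n B A C D -> (INR m - 1) * A = B ->
  exists B' A' C' D', Inv p m wt (S n) B' A' C' D' /\ (INR m - 1) * A' = B'.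
Proof.
  intros Hm Hp [HB [HA [HC HD]]] Hrel.
  destruct (blocks p m (m ^ n) (yb m n) (nb m wt n) B A C D HB HA HC HD m) as [HP [HQ [HU HV]]].
  pose proof (INR_m_ge1 m Hm) as Hm1.
  set (s := sY (m ^ n) (yb m n) m) in *. set (t := sY (m ^ n) (nb m wt n) m) in *.
  unfold Inv, Expect.
  destruct (dom' p _ (fun v => INR m ^ Yv m (assign (addrs m (S n)) v) (S n) []) _ _ HP Hp)
    as [B' HB'].
  { intros v. rewrite Y_S. fold s. apply pow_mono; auto; lia. }
  destruct (dom' p _ (fun v => INR (Yv m (assign (addrs m (S n)) v) (S n) []) *
       INR m ^ Yv m (assign (addrs m (S n)) v) (S n) []) _ _ HQ Hp)
    as [A' HA'].
  { intros v. rewrite Y_S. fold s. pose proof (pow_mono (INR m) (s v - 1) (s v) Hm1 ltac:(lia)).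
    assert (0 <= INR (s v - 1) <= INR (s v)) by (split; [apply pos_INR | apply le_INR; lia]).
    split. apply Rmult_le_pos; lra. apply Rmult_le_compat; lra. }
  destruct (dom' p _ (fun v => INR (Nv m (assign (addrs m (S n)) v) wt (S n) []) *
       INR m ^ Yv m (assign (addrs m (S n)) v) (S n) []) _ _ HU Hp)
    as [C' HC'].
  { intros v. rewrite Y_S, N_S. fold s t. pose proof (pow_mono (INR m) (s v - 1) (s v) Hm1 ltac:(lia)).
    assert (0 <= INR (t v)) by apply pos_INR.
    destruct (1 <=? s v)%nat; simpl INR.
    split. apply Rmult_le_pos; lra. apply Rmult_le_compat; lra.
    split; nra. }
  destruct (dom' p _ (fun v => INR (Nv m (assign (addrs m (S n)) v) wt (S n) []) *
       INR (Yv m (assign (addrs m (S n)) v) (S n) []) *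
       INR m ^ Yv m (assign (addrs m (S n)) v) (S n) []) _ _ HV Hp)
    as [D' HD'].
  { intros v. rewrite Y_S, N_S. fold s t. pose proof (pow_mono (INR m) (s v - 1) (s v) Hm1 ltac:(lia)).
    assert (0 <= INR (t v)) by apply pos_INR.
    assert (0 <= INR (s v - 1) <= INR (s v)) by (split; [apply pos_INR | apply le_INR; lia]).
    destruct (1 <=? s v)%nat; simpl INR.
    + split. repeat apply Rmult_le_pos; lra.
      apply Rmult_le_compat; try lra. apply Rmult_le_pos; lra.
      apply Rmult_le_compat_l; lra.
    + rewrite !Rmult_0_l. split. lra. repeat apply Rmult_le_pos; lra. }
  exists B', A', C', D'. split. { split; [|split; [|split]]; assumption. }
  pose proof (HasExp_plus _ _ _ _ _ _ (HasExp_scal _ _ _ (INR m - 1) _ HA') HP) as L.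
  pose proof (HasExp_plus _ _ _ _ _ _ HB' (HasExp_scal _ _ _ ((INR m - 1) / INR m) _ HQ)) as Rr.
  assert (E : (INR m - 1) * A' + qP B m = B' + (INR m - 1) / INR m * qQ B A m).
  { eapply HasExp_unique; [exact L|]. eapply HasExp_ext; [|exact Rr].
    intros v. cbv beta. rewrite Y_S. fold s. destruct (s v) as [|k].
    - simpl. field. lra.
    - simpl (S k - 1)%nat. rewrite Nat.sub_0_r. simpl pow. rewrite S_INR. field. lra. }
  destruct m as [|m1]; [lia|].
  destruct (q_closed B A C D m1) as [Q1 _]. rewrite Q1, qP_eq in E.
  assert (X : (INR (S m1) - 1) / INR (S m1) * (INR (S m1) * A * B ^ m1) = B ^ (S m1)).
  { simpl pow. set (Bm := B ^ m1). rewrite <- Hrel. field. lra. }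
  lra.
Qed.

Lemma T_step p m wt n B A C D : (2 <= m)%nat ->
  Inv p m wt n B A C D -> (INR m - 1) * A = B ->
  Expect p m (S n) (fun c => INR m ^ Yv m c (S n) [] * (1 + INR (Yv m c (S n) []))
                                 * INR (Nv m c wt (S n) [])) (B ^ (m - 1) * (C + D)).
Proof.
  intros Hm [HB [HA [HC HD]]] Hrel.
  destruct (blocks p m (m ^ n) (yb m n) (nb m wt n) B A C D HB HA HC HD m) as [_ [_ [_ HV]]].
  pose proof (INR_m_ge1 m Hm) as Hm1.
  set (s := sY (m ^ n) (yb m n) m) in *. set (t := sY (m ^ n) (nb m wt n) m) in *.
  pose proof (HasExp_scal _ _ _ (1 / INR m) _ HV) as H.
  unfold Expect.
  replace (B ^ (m - 1) * (C + D)) with (1 / INR m * qV B A C D m).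
  - eapply HasExp_ext; [|exact H]. intros v. cbv beta. rewrite Y_S, N_S. fold s t.
    destruct (s v) as [|k].
    + simpl. ring.
    + simpl (1 <=? S k)%nat. replace (S k - 1)%nat with k by lia. simpl pow.
      rewrite S_INR. field. lra.
  - destruct m as [|[|m2]]; try lia.
    destruct (q_closed B A C D (S m2)) as [_ [_ V1]]. rewrite V1.
    simpl pred. replace (S (S m2) - 1)%nat with (S m2) by lia. simpl pow.
    set (Bm := B ^ m2).
    assert (Hr : INR (S m2) * A = B) by (rewrite <- Hrel; rewrite (S_INR (S m2)); ring).
    rewrite <- Hr. field. lra.
Qed.


Lemma Exp0 p m F v : infinite_sum (fun y => p y * F (assign [[]] [y])) v -> Expect p m 0 F v.
Proof. intros H. unfold Expect. simpl (m ^ 0)%nat. simpl addrs.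
  apply HasExpS with (g := fun y => F (assign [[]] [y])); auto.
  intros y. apply HasExp0. Qed.

Lemma assign0 y : assign [[]] [y] [] = y.
Proof. simpl. destruct (list_eq_dec Nat.eq_dec [] []); auto. Qed.

Lemma weight_le1 sharp i y : (weight sharp i y <= 1)%nat.
Proof. unfold weight. destruct sharp; auto. destruct (Nat.eqb y i); auto. Qed.

Lemma Rprod_S e k : Rprod_upto e (S k) = Rprod_upto e k * e k.
Proof. unfold Rprod_upto. rewrite seq_S, map_app, fold_right_app. simpl.
  generalize (map e (seq 0 k)). intros l. induction l; simpl. ring. rewrite IHl. ring. Qed.

Lemma FT_split p m wt k C D :
  Expect p m k (fun c => INR (Nv m c wt k []) * INR m ^ Yv m c k []) C ->
  Expect p m k (fun c => INR (Nv m c wt k []) * INR (Yv m c k []) * INR m ^ Yv m c k []) D ->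
  Expect p m k (fun c => INR m ^ Yv m c k [] * (1 + INR (Yv m c k []))
                                 * INR (Nv m c wt k [])) (C + D).
Proof. intros H1 H2. unfold Expect in *. eapply HasExp_ext; [|exact (HasExp_plus _ _ _ _ _ _ H1 H2)].
  intros l; simpl. ring. Qed.

Theorem proposition5p1 :
  forall (m : nat) (p : nat -> R),
    (2 <= m)%nat ->
    (forall y, 0 <= p y) -> infinite_sum p 1 ->
    forall A B : R,
      infinite_sum (fun y => p y * INR y * INR m ^ y) A ->
      infinite_sum (fun y => p y * INR m ^ y) B ->
      (INR m - 1) * A = B ->
      forall (i : nat) (sharp : bool) (n : nat), (1 <= n)%nat ->
        exists (E0 : R) (e : nat -> R),
          Expect p m 0 (fun c => INR m ^ Yv m c 0 nil * (1 + INR (Yv m c 0 nil))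
                                 * INR (Nv m c (weight sharp i) 0 nil)) E0 /\
          (forall k, (k < n)%nat -> Expect p m k (fun c => INR m ^ Yv m c k nil) (e k)) /\
          Expect p m n (fun c => INR m ^ Yv m c n nil * (1 + INR (Yv m c n nil))
                                 * INR (Nv m c (weight sharp i) n nil))
                 (E0 * Rprod_upto (fun k => e k ^ (m - 1)) n).
Proof.
  intros m p Hm Hp _ A B HA HB Hrel i sharp n _.
  set (wt := weight sharp i).
  pose proof (INR_m_ge1 m Hm) as Hm1.
  assert (HB0 : Expect p m 0 (fun c => INR m ^ Yv m c 0 []) B).
  { apply Exp0. eapply isum_ext; [|exact HB]. intros y; simpl; try rewrite assign0; auto. }
  assert (HA0 : Expect p m 0 (fun c => INR (Yv m c 0 []) * INR m ^ Yv m c 0 []) A).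
  { apply Exp0. eapply isum_ext; [|exact HA]. intros y; simpl; try rewrite assign0; ring. }
  assert (Hwt : forall y, 0 <= INR (wt y) <= 1).
  { intros y. split. apply pos_INR. apply (le_INR _ 1). apply weight_le1. }
  destruct (dom' p _ (fun vals => (fun c => INR (Nv m c wt 0 []) * INR m ^ Yv m c 0 [])
     (assign (addrs m 0) vals)) _ _ HB0 Hp) as [C0 HC0].
  { intros l. simpl. generalize (hd 0%nat l). intros y. specialize (Hwt y).
    pose proof (pow_le (INR m) y ltac:(lra)). split; nra. }
  destruct (dom' p _ (fun vals => (fun c => INR (Nv m c wt 0 []) * INR (Yv m c 0 []) * INR m ^ Yv m c 0 [])
     (assign (addrs m 0) vals)) _ _ HA0 Hp) as [D0 HD0].
  { intros l. simpl. generalize (hd 0%nat l). intros y. specialize (Hwt y).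
    pose proof (pow_le (INR m) y ltac:(lra)).
    pose proof (pos_INR y).
    assert (0 <= INR y * INR m ^ y) by (apply Rmult_le_pos; lra).
    split; nra. }
  assert (Hall : forall k, exists B' A' C' D', Inv p m wt k B' A' C' D' /\ (INR m - 1) * A' = B').
  { induction k.
    - exists B, A, C0, D0. split; auto. split; [|split; [|split]]; auto.
    - destruct IHk as [B' [A' [C' [D' [HI Hr]]]]]. eapply inv_step; eauto. }
  assert (He : forall k, exists b, Expect p m k (fun c => INR m ^ Yv m c k []) b).
  { intros k. destruct (Hall k) as [B' [_ [_ [_ [[H _] _]]]]]. eauto. }
  set (e := fun k => proj1_sig (constructive_indefinite_description _ (He k))).
  assert (Hes : forall k, Expect p m k (fun c => INR m ^ Yv m c k []) (e k)).
  { intros k. unfold e. destruct (constructive_indefinite_description _ (He k)); auto. }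
  set (E0 := C0 + D0).
  assert (Claim : forall k, Expect p m k (fun c => INR m ^ Yv m c k [] * (1 + INR (Yv m c k []))
                                 * INR (Nv m c wt k [])) (E0 * Rprod_upto (fun k => e k ^ (m - 1)) k)).
  { induction k.
    - change (Rprod_upto (fun k => e k ^ (m - 1)) 0) with 1. rewrite Rmult_1_r. exact (FT_split p m wt 0 C0 D0 HC0 HD0).
    - destruct (Hall k) as [B' [A' [C' [D' [[H1 [H2 [H3 H4]]] Hr]]]]].
      assert (Ek : C' + D' = E0 * Rprod_upto (fun k => e k ^ (m - 1)) k).
      { eapply HasExp_unique; [exact (FT_split _ _ _ _ _ _ H3 H4) | exact IHk]. }
      assert (Eb : B' = e k) by (eapply HasExp_unique; [exact H1 | exact (Hes k)]).
      rewrite Rprod_S, <- Rmult_assoc, <- Ek, <- Eb, Rmult_comm.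
      exact (T_step p m wt k B' A' C' D' Hm (conj H1 (conj H2 (conj H3 H4))) Hr). }
  exists E0, e. split; [|split].
  - pose proof (Claim 0%nat) as C. unfold Rprod_upto in C. simpl in C. rewrite Rmult_1_r in C. exact C.
  - intros k _. apply Hes.
  - apply Claim.
Qed.
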